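(* Let $G$ be a finite group, let $H,K\leq G$, and let $p,q$ be primes. Then, for the prime ideals $\mathfrak{p}_{L,r}$ of the Burnside $G$-Tambara functor $\underline{A}_G$: (i) $\mathfrak{p}_{K,0}\subseteq\mathfrak{p}_{H,0}$ if and only if $H\preccurlyeq_G K$; (ii) $\mathfrak{p}_{H,0}\subsetneq\mathfrak{p}_{H,p}$ and $\mathfrak{p}_{H,p}\not\subseteq\mathfrak{p}_{K,0}$; (iii) $\mathfrak{p}_{K,p}\subseteq\mathfrak{p}_{H,q}$ if and only if $p=q$ and $O^p(H)\preccurlyeq_G O^p(K)$; (iv) $\mathfrak{p}_{K,0}\subseteq\mathfrak{p}_{H,p}$ if and only if $O^p(H)\preccurlyeq_G K$.
   Context: $A(H)$ is the Burnside ring of a finite group $H$; for $I\le H$, $\varphi^I_H\colon A(H)\to\mathbb{Z}$ is the ring map $X\mapsto|X^I|$, and for $r$ a prime or $0$, $\varphi^I_{H,r}$ is its composite with $\mathbb{Z}\to\mathbb{Z}/r\mathbb{Z}$. The Burnside $G$-Tambara functor $\underline{A}_G$ has $\underline{A}_G(G/H)=A(H)$ with restriction of action, transfer $K\times_H-$, norm $\mathrm{Map}_H(K,-)$ and conjugations. For $L\le G$ and $r$ a prime or $0$, $\mathfrak{p}_{L,r}$ is the (prime) Tambara ideal with $\mathfrak{p}_{L,r}(G/H)=\bigcap_{I\le H,\ I\preccurlyeq_G L}\ker(\varphi^I_{H,r})$, where $I\preccurlyeq_G L$ means $I$ is conjugate in $G$ to a subgroup of $L$. For $H\le G$ and $p$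 prime, $O^p(H)$ is the intersection of all normal subgroups $I\trianglelefteq H$ with $|H:I|$ a power of $p$. *)

(* Defs.v *)
From mathcomp Require Import all_boot all_order all_algebra all_fingroup all_solvable.
Set Implicit Arguments. Unset Strict Implicit. Unset Printing Implicit Defensive.
Import GRing.Theory Num.Theory.
Local Open Scope group_scope.

Section Burnside.
Variable gT : finGroupType.

Definition subconjG (G : {set gT}) (I L : {set gT}) : Prop :=
  exists2 g, g \in G & I :^ g \subset L.

Definition mark_coset (H I J : {set gT}) : nat :=
  #|[set C in lcosets I H | [forall j in J, j *: C == C]]|.

(* An element of A(H) is represented as a Z-linear combination
   sum_I c I [H/I] of transitive H-sets, I ranging over the subgroups of H.
   phi^J_H of such an element: *)
Definition burnside_mark (H : {set gT}) (c : {set gT} -> int) (J : {set gT}) : int :=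
  (\sum_(I : {set gT} | (I \subset H) && group_set I) c I * (mark_coset H I J)%:Z)%R.

Definition in_primeTI (G L : {set gT}) (r : nat) (H : {set gT}) (c : {set gT} -> int)
  : Prop :=
  forall I : {group gT}, I \subset H -> subconjG G I L ->
    (r%:Z %| burnside_mark H c I)%Z.

(* inclusion of Tambara ideals p_{K,r} ⊆ p_{L,s}: levelwise at every orbit G/H *)
Definition primeTI_sub (G K : {set gT}) (r : nat) (L : {set gT}) (s : nat) : Prop :=
  forall H : {group gT}, H \subset G ->
    forall c : {set gT} -> int, in_primeTI G K r H c -> in_primeTI G L s H c.

Definition Oup (p : nat) (H : {set gT}) : {set gT} :=
  \bigcap_(I : {group gT} | (I <| H) && p.-nat #|H : I|) (I : {set gT}).

End Burnside.

(* Main.v *)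
Require Import Defs.
From mathcomp Require Import all_boot all_order all_algebra all_fingroup all_solvable.
Set Implicit Arguments. Unset Strict Implicit. Unset Printing Implicit Defensive.
Import GRing.Theory Num.Theory.
Local Open Scope group_scope.

Section Part1.
Variable gT : finGroupType.
Implicit Types (A B C S : {set gT}) (a x y : gT).

Definition lact (C : {set gT}) (a : gT) : {set gT} := a^-1 *: C.

Lemma lact1 : lact^~ 1 =1 id.
Proof. by move=> C; rewrite /lact invg1 lcoset1. Qed.

Lemma lactM C : act_morph lact C.
Proof. by move=> a b; rewrite /lact invMg lcosetM. Qed.

Definition lmact := TotalAction lact1 lactM.

Lemma lmactE C a : lmact C a = a^-1 *: C.
Proof. by []. Qed.

Lemma fix_lmactE C a : (lmact C a == C) = (a *: C == C).
Proof.
rewrite lmactE; apply/eqP/eqP => E.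
  by rewrite -{1}E -lcosetM mulgV lcoset1.
by rewrite -{1}E -lcosetM mulVg lcoset1.
Qed.

Lemma markE (H I J : {set gT}) :
  mark_coset H I J = #|'Fix_(lcosets I H | lmact)(J)|.
Proof.
rewrite /mark_coset; apply: eq_card => C; rewrite inE [in RHS]inE.
congr (_ && _); apply/forallP/afixP => /= [Hf a Ja | Hf j].
  by apply/eqP; rewrite fix_lmactE; move: (Hf a); rewrite Ja.
by apply/implyP => Jj; rewrite -fix_lmactE; apply/eqP; exact: (Hf j Jj).
Qed.

End Part1.

Set Implicit Arguments. Unset Strict Implicit. Unset Printing Implicit Defensive.
Import GRing.Theory Num.Theory.
Local Open Scope group_scope.

Section Part2.
Variable gT : finGroupType.
Implicit Types (A B C S : {set gT}) (a x y : gT).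

Lemma acts_lcosets (N I : {group gT}) : [acts N, on lcosets I N | lmact gT].
Proof.
apply/subsetP => a Na; rewrite !inE /=; apply/subsetP => C.
move=> /lcosetsP[x Nx ->]; rewrite inE /lact -lcosetM.
by apply/lcosetsP; exists (a^-1 * x); rewrite // groupM ?groupV.
Qed.

Lemma mark_top (N : {group gT}) (L : {set gT}) : L \subset N -> mark_coset N N L = 1%N.
Proof.
move=> sLN; rewrite /mark_coset.
have -> : lcosets N N = [set (N : {set gT})].
  apply/setP => C; rewrite inE; apply/lcosetsP/eqP => [[x Nx ->]|->].
    by rewrite lcoset_id.
  by exists 1; rewrite ?group1 ?lcoset1.
rewrite (_ : [set _ in _ | _] = [set (N : {set gT})]) ?cards1 //.
apply/setP => C; rewrite !inE; case: eqP => //= ->.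
by apply/forallP => j; apply/implyP => Lj; rewrite lcoset_id // (subsetP sLN).
Qed.

Lemma fixed_coset (J : {group gT}) (L : {set gT}) x :
  [forall j in L, j *: (x *: J) == x *: J] -> L :^ x \subset J.
Proof.
move/forallP => Hf; apply/subsetP => y; rewrite mem_conjg => Ly.
move: (Hf (y ^ x^-1)); rewrite Ly /= => /eqP E.
have : (y ^ x^-1 * x) \in x *: J by rewrite -E -lcosetM lcoset_refl.
by rewrite mem_lcoset conjgE invgK !mulgA mulVg mul1g mulgKV.
Qed.

Lemma mark_nz (N J : {group gT}) (L : {set gT}) :
  mark_coset N J L != 0%N -> exists2 n, n \in N & L :^ n \subset J.
Proof.
rewrite /mark_coset -lt0n => /card_gt0P[C]; rewrite inE => /andP[].
by case/lcosetsP => x Nx -> /fixed_coset; exists x.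
Qed.

Lemma mark_self (N J : {group gT}) : J \subset N ->
  mark_coset N J J = #|'N_N(J) : J|.
Proof.
move=> sJN; rewrite /mark_coset -card_lcosets; apply: eq_card => C.
rewrite inE; apply/andP/lcosetsP => [[/lcosetsP[x Nx ->] /fixed_coset sJx]|[x]].
  exists x => //; rewrite inE Nx; apply/normP.
  by apply/eqP; rewrite eqEcard sJx cardJg leqnn.
rewrite inE => /andP[Nx nJx] ->; split; first by apply/lcosetsP; exists x.
apply/forallP => j; apply/implyP => Jj.
by rewrite -lcosetM conjgC lcosetM (lcoset_id (_ : j ^ x \in J)) // memJ_norm.
Qed.

Lemma fixJ_sub (N I : {group gT}) (L : {set gT}) n : n \in N ->
  #|'Fix_(lcosets I N | lmact gT)(L)| <= #|'Fix_(lcosets I N | lmact gT)(L :^ n)|.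
Proof.
move=> Nn; rewrite -(card_imset _ (act_inj (lmact gT) n)).
apply: subset_leq_card; apply/subsetP => D /imsetP[C].
rewrite inE => /andP[XC /afixP FC] ->; rewrite inE; apply/andP; split.
  by have := subsetP (acts_lcosets N I) n Nn; rewrite !inE /= => /subsetP/(_ C XC); rewrite inE.
apply/afixP => b; rewrite mem_conjg => Lb.
rewrite -actM (_ : n * b = b ^ n^-1 * n); first by rewrite actM (FC _ Lb).
by rewrite conjgE invgK mulgA mulgKV.
Qed.

Lemma mark_conj (N I : {group gT}) (L : {set gT}) n : n \in N ->
  mark_coset N I (L :^ n) = mark_coset N I L.
Proof.
move=> Nn; rewrite !markE; apply/eqP; rewrite eqn_leq fixJ_sub //.
by rewrite -{2}(conjsgK n L) fixJ_sub ?groupV.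
Qed.

End Part2.

Set Implicit Arguments. Unset Strict Implicit. Unset Printing Implicit Defensive.
Import GRing.Theory Num.Theory.
Local Open Scope group_scope.

Section Part3.
Variable gT : finGroupType.
Implicit Types (A B C S : {set gT}) (a x y : gT).

Lemma mark_cong (N I L : {group gT}) :
  (#|'N_N(L)| %| \sum_(a in 'N_N(L)) mark_coset N I <<a |: L>>)%N.
Proof.
set to := lmact gT.
set Y := 'Fix_(lcosets I N | to)(L).
have actY : [acts 'N_N(L), on Y | to].
  apply: actsI; first exact: subset_trans (subsetIl _ _) (acts_lcosets N I).
  exact: acts_fix_norm (subsetIr _ _).
rewrite (eq_bigr (fun a => #|'Fix_(Y | to)[a]|)); last first.
  move=> a _; rewrite markE /Y; congr #|_|.
  by rewrite afix_gen afixU -!setIA; congr (_ :&: _); exact: setIC.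
by rewrite Frobenius_Cauchy // dvdn_mull.
Qed.

Lemma mark_modp (N I J J0 : {group gT}) (p : nat) :
  J \subset N -> J0 \subset J -> J \subset 'N(J0) -> p.-nat #|J : J0| ->
  mark_coset N I J = mark_coset N I J0 %[mod p].
Proof.
move=> sJN sJ0J nJ0J pJ; set to := lmact gT.
rewrite !markE; set S := 'Fix_(lcosets I N | to)(J0).
have -> : 'Fix_(lcosets I N | to)(J) = 'Fix_(S | to)(J).
  by rewrite /S -setIA (setIidPr (afixS to sJ0J)).
have nSG : [acts J, on S | to].
  apply: actsI; first exact: subset_trans sJN (acts_lcosets N I).
  exact: acts_fix_norm.
apply/esym/eqP; rewrite -(cardsID 'Fix_to(J)) eqn_mod_dvd (leq_addr, addKn) //.
have: [acts J, on S :\: 'Fix_to(J) | to]; last move/acts_sum_card_orbit <-.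
  rewrite actsD // -(setIidPr (subsetT J)); apply: subset_trans (acts_subnorm_fix _ _).
  by rewrite setIS ?normG.
apply: dvdn_sum => _ /imsetP[x /setDP[Sx nfx] ->].
have [k oGx]: {k | #|orbit to J x| = (p ^ k)%N}.
  apply: p_natP; apply: pnat_dvd pJ; rewrite card_orbit_in ?subsetT //.
  apply: indexgS; apply/subsetP => j J0j; rewrite inE (subsetP sJ0J) //=.
  by move: Sx; rewrite inE => /andP[_ /afixP/(_ j J0j)] E; apply/astab1P.
case: k oGx => [/card_orbit1 fix_x | k ->]; last by rewrite expnS dvdn_mulr.
by case/afixP: nfx => a Ga; apply/set1P; rewrite -fix_x mem_orbit.
Qed.

End Part3.

Set Implicit Arguments. Unset Strict Implicit. Unset Printing Implicit Defensive.
Import GRing.Theory Num.Theory.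
Local Open Scope group_scope.

Section Part4.
Variable gT : finGroupType.
Variable N : {group gT}.
Implicit Types (A B C S : {set gT}) (a x y : gT).

Definition classf (f : {set gT} -> int) :=
  forall (L : {group gT}) n, L \subset N -> n \in N -> f (L :^ n) = f L.
Definition congf (f : {set gT} -> int) :=
  forall L : {group gT}, L \subset N ->
    (Posz #|'N_N(L)| %| (\sum_(a in 'N_N(L)) f <<a |: L>>)%R)%Z.
Definition reprf (f : {set gT} -> int) :=
  exists c, forall L : {group gT}, L \subset N -> burnside_mark N c L = f L.
Definition vanish k (f : {set gT} -> int) :=
  forall L : {group gT}, L \subset N -> (k < #|L|)%N -> f L = 0%R.

Lemma bm_add c d L :
  burnside_mark N (fun S => c S + d S)%R L = (burnside_mark N c L + burnside_mark N d L)%R.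
Proof. by rewrite /burnside_mark -big_split; apply: eq_bigr => I _; rewrite mulrDl. Qed.

Lemma bm_delta (J : {group gT}) (k : int) L : J \subset N ->
  burnside_mark N (fun S => if S == J then k else 0%R) L = (k * Posz (mark_coset N J L))%R.
Proof.
move=> sJN; rewrite /burnside_mark (bigD1 (J : {set gT})) /=; last by rewrite sJN groupP.
rewrite eqxx big1 ?addr0 // => I /andP[_ /negbTE ->]; by rewrite mul0r.
Qed.

Lemma bm_zero L : burnside_mark N (fun _ => 0%R) L = 0%R.
Proof. by rewrite /burnside_mark big1 // => I _; rewrite mul0r. Qed.

Lemma sumZ (I : finType) (P : pred I) (F : I -> nat) :
  (\sum_(i | P i) Posz (F i))%R = Posz (\sum_(i | P i) F i)%N.
Proof. by rewrite (big_morph Posz PoszD (erefl 0%Z)). Qed.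

Lemma mark_classf (J : {group gT}) : classf (fun S => Posz (mark_coset N J S)).
Proof. by move=> L n _ Nn /=; rewrite mark_conj. Qed.

Lemma mark_congf (J : {group gT}) : congf (fun S => Posz (mark_coset N J S)).
Proof. by move=> L _; rewrite sumZ dvdzE /= mark_cong. Qed.


Lemma repr_ind k : forall f, classf f -> congf f -> vanish k f -> reprf f.
Proof.
elim: k => [|k IHk] f cf gf vf.
  by exists (fun _ => 0%R) => L sLN; rewrite bm_zero vf // cardG_gt0.
pose Sf (g : {set gT} -> int) :=
  [set L : {group gT} | (L \subset N) && (#|L| == k.+1) && (g L != 0%R)].
have base : forall g, classf g -> congf g -> vanish k.+1 g -> Sf g = set0 -> reprf g.
  move=> g cg gg vg S0; apply: IHk cg gg _ => L sLN ltkL.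
  move: ltkL; rewrite leq_eqVlt => /orP[/eqP eL | ltL]; last exact: vg.
  apply/eqP; apply: contraT => nz.
  have : L \in Sf g by rewrite inE sLN -eL eqxx nz.
  by rewrite S0 inE.
suff main : forall n g, classf g -> congf g -> vanish k.+1 g -> (#|Sf g| <= n)%N -> reprf g.
  exact: (main _ f cf gf vf (leqnn _)).
elim=> [|n IHn] g cg gg vg szg.
  by apply: base => //; apply/eqP; rewrite -cards_eq0 -leqn0.
case: (set_0Vmem (Sf g)) => [S0 | [J SJ]]; first exact: base.
have SJ' := SJ; move: SJ'; rewrite inE => /andP[/andP[sJN /eqP cJ] nzJ].
set w := #|'N_N(J) : J|.
have sJNJ : J \subset 'N_N(J) by rewrite subsetI sJN normG.
have sumE : (\sum_(a in 'N_N(J)) g <<a |: J>>)%R = (g J *+ #|J|)%R.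
  rewrite (big_setID (J : {set gT})) /= (setIidPr sJNJ).
  rewrite [X in (_ + X)%R]big1 ?addr0; last first.
    move=> a /setDP[Na nJa].
    have Na' : a \in N by move: Na; rewrite inE => /andP[].
    apply: (vg <<a |: J>>%G); first by rewrite /= gen_subG subUset sub1set Na' sJN.
    rewrite /= -cJ; apply: proper_card; rewrite properE (subset_trans (subsetUr _ _) (subset_gen _)) /=.
    apply/negP => /subsetP/(_ a); rewrite (negbTE nJa) => /(_ (mem_gen (setU11 _ _))).
    by [].
  rewrite (eq_bigr (fun _ => g J)) ?sumr_const // => a Ja.
  by rewrite (setUidPr _) ?sub1set // genGid.
have dvdw : (Posz w %| g J)%Z.
  have := gg J sJN; rewrite sumE -(Lagrange sJNJ) PoszM -mulr_natl natz.
  by rewrite dvdz_mul2l // eqz_nat -lt0n cardG_gt0.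
set k' := (g J %/ Posz w)%Z.
have gJ : g J = (k' * Posz w)%R by rewrite divzK.
pose g' := fun S => (g S - k' * Posz (mark_coset N J S))%R.
have cg' : classf g' by move=> L x sLN Nx; rewrite /g' cg // mark_conj.
have gg' : congf g'.
  move=> L sLN; rewrite /g' sumrB -mulr_sumr; apply: rpredB; first exact: gg.
  by apply: dvdz_mull; exact: mark_congf.
have vg' : vanish k.+1 g'.
  move=> L sLN ltL; rewrite /g' vg //.
  case: (eqVneq (mark_coset N J L) 0%N) => [->|/mark_nz[x Nx sLJ]].
    by rewrite mulr0 subr0.
  exfalso; rewrite -(cardJg L x) in ltL; have := subset_leq_card sLJ.
  by rewrite cJ => /(leq_trans ltL); rewrite ltnn.
have g'J : g' J = 0%R by rewrite /g' mark_self // -/w gJ subrr.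
have szg' : (#|Sf g'| <= n)%N.
  have sub : Sf g' \subset Sf g :\ J.
    apply/subsetP => L; rewrite !inE => /andP[/andP[sLN /eqP cL] nz'].
    case: (eqVneq (mark_coset N J L) 0%N) => [m0 | /mark_nz[x Nx sLJ]].
      have eq : g' L = g L by rewrite /g' m0 mulr0 subr0.
      rewrite sLN cL eqxx -eq nz' !andbT /=.
      by apply: contraNneq nz' => ->; rewrite g'J.
    exfalso; have eJ : L :^ x = J.
      by apply/eqP; rewrite eqEcard sLJ cardJg cJ cL leqnn.
    by move: nz'; rewrite -(cg' L x sLN Nx) eJ g'J eqxx.
  have := subset_leq_card sub; rewrite (cardsD1 J (Sf g)) SJ add1n in szg.
  by move=> le; apply: leq_trans le _; rewrite -ltnS.
have [c' Hc'] := IHn g' cg' gg' vg' szg'.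
exists (fun S => c' S + (if S == J then k' else 0))%R => L sLN.
by rewrite bm_add bm_delta // Hc' // /g' subrK.
Qed.

End Part4.

Set Implicit Arguments. Unset Strict Implicit. Unset Printing Implicit Defensive.
Import GRing.Theory Num.Theory.
Local Open Scope group_scope.

Section Part5.
Variable gT : finGroupType.
Implicit Types (A B C S : {set gT}) (a x y : gT).

Lemma dvd_card_Rstable (L : {group gT}) (A : {set gT}) :
  (forall a l, a \in A -> l \in L -> a * l \in A) -> (#|L| %| #|A|)%N.
Proof.
move=> stab.
have actA : [acts L, on A | 'R].
  apply/subsetP => l Ll; rewrite !inE /=; apply/subsetP => a Aa.
  by rewrite inE /= stab.
rewrite -(acts_sum_card_orbit actA); apply: dvdn_sum => _ /imsetP[a _ ->].
by rewrite orbitR card_lcoset.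
Qed.

Lemma ghost_delta (N : {group gT}) (m : nat) :
  (forall (L : {group gT}) a, L <| N -> a \in N -> <<a |: L>> = N -> (#|N : L| %| m)%N) ->
  exists c, forall L : {group gT}, L \subset N ->
    burnside_mark N c L = (if L == N :> {set gT} then Posz m else 0%R).
Proof.
move=> Hm.
pose f := fun S : {set gT} => if S == N then Posz m else 0%R.
have cf : classf N f.
  move=> L n sLN Nn; rewrite /f; congr (if _ then _ else _).
  apply/eqP/eqP => [E | ->]; last by rewrite conjGid.
  by rewrite -(conjsgK n L) E conjGid ?groupV.
have gf : congf N f.
  move=> L sLN.
  pose A := [set a in 'N_N(L) | <<a |: L>> == N].
  have -> : (\sum_(a in 'N_N(L)) f <<a |: L>>)%R = (\sum_(a in A) Posz m)%R.
    rewrite (bigID (fun a => <<a |: L>> == N)) /= [X in (_ + X)%R]big1 ?addr0.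
      by apply: eq_big => [a | a /andP[_ E]]; rewrite ?inE // /f E.
    by move=> a /andP[_ /negbTE E]; rewrite /f E.
  rewrite sumr_const -mulr_natr natz -PoszM dvdzE /=.
  case: (set_0Vmem A) => [-> | [a0 Aa0]]; first by rewrite cards0 muln0 dvdn0.
  move: Aa0; rewrite inE => /andP[NLa0 /eqP Ea0].
  have sNNL : N \subset 'N_N(L).
    by rewrite -{1}Ea0 gen_subG subUset sub1set NLa0 subsetI sLN normG.
  have eNL : 'N_N(L) = N by apply/eqP; rewrite eqEsubset subsetIl sNNL.
  have nLN : L <| N.
    by rewrite /normal sLN (subset_trans sNNL) ?subsetIr.
  have a0N : a0 \in N by rewrite -eNL.
  have dm := Hm L a0 nLN a0N Ea0.
  have dA : (#|L| %| #|A|)%N.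
    apply: dvd_card_Rstable => a l; rewrite inE => /andP[NLa /eqP Ea] Ll.
    have Nl : l \in 'N_N(L) by rewrite eNL (subsetP sLN).
    rewrite inE groupM //= -Ea eqEsubset !gen_subG !subUset !sub1set.
    rewrite !(subset_trans _ (subset_gen _)) ?subsetUr // !andbT.
    apply/andP; split.
      by rewrite groupM // mem_gen // ?setU11 // inE Ll orbT.
    rewrite -{1}(mulgK l a) groupM ?groupV ?mem_gen ?setU11 //.
    by rewrite !inE Ll orbT.
  by rewrite eNL -(Lagrange (normal_sub nLN)) mulnC dvdn_mul.
have vf : vanish N #|N| f by move=> L sLN; rewrite ltnNge subset_leq_card.
have [c Hc] := repr_ind cf gf vf.
by exists c.
Qed.

End Part5.

Set Implicit Arguments. Unset Strict Implicit. Unset Printing Implicit Defensive.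
Local Open Scope group_scope.

Section Part6.
Variable gT : finGroupType.
Variable p : nat.
Implicit Types (A B C S : {set gT}) (a x y : gT).

Lemma idx_sub (J X B : {group gT}) : J \subset X -> B <| X -> (#|J : B| %| #|X : B|)%N.
Proof.
move=> sJX nBX; have nBJ : J \subset 'N(B) := subset_trans sJX (normal_norm nBX).
rewrite -indexMg -norm_joinEr //; apply: indexSg; first exact: joing_subl.
by rewrite join_subG normal_sub.
Qed.

Lemma pidxI (X A B : {group gT}) : A <| X -> p.-nat #|X : A| -> B <| X -> p.-nat #|X : B| ->
  (A :&: B <| X) && p.-nat #|X : A :&: B|.
Proof.
move=> nA pA nB pB; rewrite normalI //=.
rewrite -(Lagrange_index (normal_sub nA) (subsetIl A B)) pnatM pA /= indexgI.
exact: pnat_dvd (idx_sub (normal_sub nA) nB) pB.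
Qed.

Definition Pidx (X : {group gT}) (Y : {set gT}) :=
  [&& group_set (X :&: Y), X :&: Y <| X & p.-nat #|X : X :&: Y|].

Lemma PidxT X : Pidx X setT.
Proof. by rewrite /Pidx setIT groupP normal_refl indexgg. Qed.

Lemma PidxI X Y Z : Pidx X Y -> Pidx X Z -> Pidx X (Y :&: Z).
Proof.
case/and3P => /isgroupP[A EA] nA pA /and3P[/isgroupP[B EB] nB pB].
rewrite /Pidx setIIr EA EB groupP /=; rewrite EA in nA pA; rewrite EB in nB pB.
exact: pidxI.
Qed.

Lemma Pidx_bigcap (X : {group gT}) (I : finType) (P : pred I) (F : I -> {set gT}) :
  (forall i, P i -> Pidx X (F i)) -> Pidx X (\bigcap_(i | P i) F i).
Proof. by move=> H; apply: (big_ind (Pidx X)) => //; [exact: PidxT | exact: PidxI]. Qed.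

Lemma Pidx_grp (X Y : {group gT}) : Y <| X -> p.-nat #|X : Y| -> Pidx X Y.
Proof. by move=> nY pY; rewrite /Pidx (setIidPr (normal_sub nY)) groupP nY. Qed.

Lemma Oup_sub (H : {group gT}) : Oup p H \subset H.
Proof. by rewrite /Oup (bigcap_inf H) // normal_refl indexgg. Qed.

Lemma Oup_min (H I : {group gT}) : I <| H -> p.-nat #|H : I| -> Oup p H \subset I.
Proof. by move=> nI pI; rewrite /Oup (bigcap_inf I) // nI. Qed.

Lemma Oup_Pidx (H : {group gT}) : Pidx H (Oup p H).
Proof. by apply: Pidx_bigcap => I /andP[nI pI]; exact: Pidx_grp. Qed.

Lemma Oup_gs (H : {group gT}) : group_set (Oup p H).
Proof. by have /and3P[] := Oup_Pidx H; rewrite (setIidPr (Oup_sub H)). Qed.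

Definition OupG (H : {group gT}) := Group (Oup_gs H).

Lemma OupGE (H : {group gT}) : OupG H = Oup p H :> {set gT}.
Proof. by []. Qed.

Lemma Oup_normal (H : {group gT}) : OupG H <| H.
Proof. by have /and3P[] := Oup_Pidx H; rewrite (setIidPr (Oup_sub H)). Qed.

Lemma Oup_pidx (H : {group gT}) : p.-nat #|H : OupG H|.
Proof. by have /and3P[] := Oup_Pidx H; rewrite (setIidPr (Oup_sub H)). Qed.

Lemma Oup_conj_sub (J H : {group gT}) g : J :^ g \subset H -> Oup p J :^ g \subset Oup p H.
Proof.
move=> sJH; rewrite sub_conjg -OupGE.
have sJH' : J \subset (H :^ g^-1)%G by rewrite /= -sub_conjg.
have nO : (OupG H :^ g^-1)%G <| (H :^ g^-1)%G by rewrite /= normalJ Oup_normal.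
have pO : p.-nat #|(H :^ g^-1)%G : (OupG H :^ g^-1)%G| by rewrite /= indexJg Oup_pidx.
apply: subset_trans (subsetIr J (OupG H :^ g^-1)).
apply: Oup_min; first exact: normalGI sJH' nO.
by rewrite indexgI; apply: pnat_dvd (idx_sub sJH' nO) pO.
Qed.

Lemma Oup_perfect (H M : {group gT}) : M <| OupG H -> p.-nat #|OupG H : M| ->
  OupG H \subset M.
Proof.
move=> nM pM; set O := OupG H.
have nOH := Oup_normal H.
pose M' := (\bigcap_(h in H) (M :^ h)%G)%G.
have sM'M : M' \subset M.
  by apply: subset_trans (bigcap_inf 1 (group1 H)) _; rewrite /= conjsg1.
have sM'O : M' \subset O := subset_trans sM'M (normal_sub nM).
have PM' : Pidx O M'.
  apply: Pidx_bigcap => h Hh; apply: Pidx_grp => /=.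
    by rewrite -OupGE -(normP (subsetP (normal_norm nOH) h Hh)) normalJ.
  by rewrite -OupGE -{1}(normP (subsetP (normal_norm nOH) h Hh)) indexJg.
case/and3P: PM' => _; rewrite (setIidPr sM'O) => nM'O pM'O.
have nM'H : M' <| H.
  rewrite /normal (subset_trans sM'O (normal_sub nOH)) /=.
  apply/normsP => x Hx; apply/eqP; rewrite eqEcard cardJg leqnn andbT.
  apply/subsetP => y; rewrite mem_conjg => /bigcapP My.
  apply/bigcapP => h Hh; have := My (h * x^-1) (groupM Hh (groupVr Hx)).
  by rewrite /= -mem_conjg -conjsgM mulgKV.
apply: subset_trans sM'M; apply: Oup_min => //.
by rewrite -(Lagrange_index (normal_sub nOH) sM'O) pnatM Oup_pidx.
Qed.

End Part6.

Set Implicit Arguments. Unset Strict Implicit. Unset Printing Implicit Defensive.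
Local Open Scope group_scope.

Section Part7.
Variable gT : finGroupType.
Implicit Types (A B C S : {set gT}) (a x y : gT).

Lemma perfect_cyc (O L : {group gT}) a p : prime p ->
  (forall M : {group gT}, M <| O -> p.-nat #|O : M| -> O \subset M) ->
  L <| O -> a \in O -> <<a |: L>> = O -> p^'.-nat #|O : L|.
Proof.
move=> pp perf nLO aO EO.
have nLO' := normal_norm nLO; have aN : a \in 'N(L) := subsetP nLO' a aO.
have EO' : L <*> <[a]> = O.
  apply/eqP; rewrite eqEsubset join_subG normal_sub // cycle_subG aO /=.
  rewrite -{1}EO gen_subG subUset sub1set joing_subl andbT.
  by rewrite (subsetP (joing_subr _ _)) ?cycle_id.
have EQ : O / L = <[coset L a]>.
  by rewrite -EO' quotientYidl ?cycle_subG // quotient_cycle.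
set x := coset L a.
pose M := (coset L @*^-1 <[x ^+ p]>)%G.
have nMO : M <| O.
  rewrite -{1}(quotientGK nLO) /M /= cosetpre_normal EQ.
  by rewrite -sub_abelian_normal ?cycle_abelian ?cycleX.
have sMO := normal_sub nMO.
set n := #[x]; set g := gcdn n p.
have n_gt0 : (0 < n)%N by rewrite order_gt0.
have g_dvd : (g %| n)%N by rewrite dvdn_gcdl.
have oxp : #[x ^+ p] = (n %/ g)%N by rewrite orderXgcd.
have cM : #|M| = (#|L| * (n %/ g))%N by rewrite card_cosetpre -oxp. 
have cO : #|O| = (#|L| * n)%N.
  by rewrite -(Lagrange (normal_sub nLO)) -card_quotient // EQ.
have iOM : #|O : M| = g.
  have := Lagrange sMO; rewrite cM cO -{2}(divnK g_dvd) mulnA => /eqP.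
  rewrite eqn_pmul2l; first by move/eqP.
  by rewrite muln_gt0 cardG_gt0 divn_gt0 ?gcdn_gt0 ?n_gt0 // dvdn_leq.
have pOM : p.-nat #|O : M|.
  by rewrite iOM; apply: pnat_dvd (dvdn_gcdr _ _) (pnat_id pp).
have sOM := perf M nMO pOM.
have : a \in M by rewrite (subsetP sOM).
move/morphpreP => [_]; rewrite -/x => xin.
have le : (n <= n %/ g)%N by rewrite -oxp subset_leq_card // cycle_subG.
have g1 : g = 1%N.
  have g_gt0 : (0 < g)%N by rewrite /g gcdn_gt0 n_gt0.
  case: (ltngtP g 1) => [|g_gt1|//]; first by rewrite ltnS leqn0 => /eqP g0; rewrite g0 in g_gt0.
  by have := ltn_Pdiv g_gt1 n_gt0; rewrite ltnNge le.
rewrite -card_quotient // EQ p'natE // -prime_coprime // coprime_sym.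
by rewrite /coprime -/n -/g g1.
Qed.

End Part7.

Set Implicit Arguments. Unset Strict Implicit. Unset Printing Implicit Defensive.
Import GRing.Theory Num.Theory.
Local Open Scope group_scope.

Section Part8.
Variable gT : finGroupType.
Implicit Types (A B C S : {set gT}) (a x y : gT).

Lemma subconjP (G : {group gT}) (I L : {set gT}) :
  reflect (subconjG G I L) [exists g in G, I :^ g \subset L].
Proof.
apply: (iffP existsP) => [[g /andP[Gg s]]|[g Gg s]]; first by exists g.
by exists g; rewrite Gg.
Qed.

Lemma subconj_refl (G : {group gT}) (I : {set gT}) : subconjG G I I.
Proof. by exists 1; rewrite ?group1 ?conjsg1. Qed.

Lemma subconj_trans (G : {group gT}) (I H K : {set gT}) :
  subconjG G I H -> subconjG G H K -> subconjG G I K.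
Proof.
move=> [g Gg sIH] [h Gh sHK]; exists (g * h); first exact: groupM.
by rewrite conjsgM (subset_trans _ sHK) // conjSg.
Qed.

Lemma prime_mono (G : {group gT}) (K L : {set gT}) r :
  subconjG G L K -> primeTI_sub G K r L r.
Proof.
move=> sLK H sHG c Hc I sIH sIL; apply: Hc sIH _.
exact: subconj_trans sIL sLK.
Qed.

Definition delta (N : {set gT}) (k : int) := fun S : {set gT} => if S == N then k else 0%R.

Lemma bm_delta_top (N : {group gT}) k (I : {set gT}) : I \subset N ->
  burnside_mark N (delta N k) I = k.
Proof. by move=> sIN; rewrite /delta bm_delta // mark_top // mulr1. Qed.

Lemma bm_modp (L J : {group gT}) c (p : nat) : J \subset L ->
  (Posz p %| burnside_mark L c J)%Z = (Posz p %| burnside_mark L c (OupG p J))%Z.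
Proof.
move=> sJL.
have D : (Posz p %| (burnside_mark L c J - burnside_mark L c (OupG p J))%R)%Z.
  rewrite /burnside_mark -sumrB; apply: rpred_sum => I /andP[sIL /isgroupP[I' ->]].
  rewrite -mulrBr; apply: dvdz_mull; rewrite -eqz_mod_dvd !modz_nat eqz_nat.
  apply/eqP; apply: mark_modp.
  - exact: sJL.
  - exact: Oup_sub.
  - exact: normal_norm (Oup_normal p J).
  - exact: Oup_pidx.
move: D; rewrite -eqz_mod_dvd => /eqP E.
by apply/dvdz_mod0P/dvdz_mod0P; rewrite E.
Qed.

Lemma perf_elem (O : {group gT}) (p : nat) : prime p ->
  (forall M : {group gT}, M <| O -> p.-nat #|O : M| -> O \subset M) ->
  exists c, exists2 m : nat, ~~ (p %| m)%N & forall L : {group gT}, L \subset O ->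
    burnside_mark O c L = (if L == O :> {set gT} then Posz m else 0%R).
Proof.
move=> pp perf.
have hyp : forall (L : {group gT}) a, L <| O -> a \in O -> <<a |: L>> = O ->
    (#|O : L| %| #|O|`_p^')%N.
  move=> L a nLO aO EO; have pL := perfect_cyc pp perf nLO aO EO.
  by rewrite -(part_pnat_id pL) partn_dvd ?cardG_gt0 ?dvdn_indexg.
have [c Hc] := ghost_delta hyp.
exists c; exists (#|O|`_p^')%N => //.
by rewrite -p'natE // part_pnat.
Qed.

End Part8.

Set Implicit Arguments. Unset Strict Implicit. Unset Printing Implicit Defensive.
Import GRing.Theory Num.Theory.
Local Open Scope group_scope.

Theorem theorem4p16 (gT : finGroupType) (G H K : {group gT}) (p q : nat)
  (sHG : H \subset G) (sKG : K \subset G) (pp : prime p) (pq : prime q) :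
  (primeTI_sub G K 0 H 0 <-> subconjG G H K) /\
  ((primeTI_sub G H 0 H p /\ ~ primeTI_sub G H p H 0) /\ ~ primeTI_sub G H p K 0) /\
  (primeTI_sub G K p H q <-> p = q /\ subconjG G (Oup p H) (Oup p K)) /\
  (primeTI_sub G K 0 H p <-> subconjG G (Oup p H) K).
Proof.
have p_gt0 : (0 < p)%N := prime_gt0 pp.
have pc : in_primeTI G H p H (delta H (Posz p)).
  by move=> I sIH _; rewrite bm_delta_top // dvdzz.
have bmH : burnside_mark H (delta H (Posz p)) H = Posz p by rewrite bm_delta_top.
set O := OupG p H.
have sOH : O \subset H := Oup_sub p H.
have sOG : O \subset G := subset_trans sOH sHG.
have perfO := @Oup_perfect gT p H.
have [cO [m pm HcO]] := perf_elem pp perfO.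
have OO : O \subset Oup p O.
  by apply: perfO; [exact: Oup_normal | exact: Oup_pidx].
have bmOO : burnside_mark O cO O = Posz m by rewrite HcO // eqxx.
have sOHc : subconjG G O H by exists 1; rewrite ?group1 ?conjsg1.
have npm : ~ (Posz p %| Posz m)%Z by rewrite dvdzE /=; apply/negP.
split; last split; last split.
- split; last exact: prime_mono.
  move=> Hs; apply/subconjP; apply: contraT => /subconjP nHK.
  have [c Hc] := @ghost_delta gT H #|H| (fun L a _ _ _ => dvdn_indexg H L).
  have : in_primeTI G K 0 H c.
    move=> I sIH sIK; rewrite Hc //; case: eqP => [EI|]; last by rewrite dvdz0.
    by exfalso; apply: nHK; rewrite -EI.
  move/(Hs H sHG)/(_ H (subxx _) (subconj_refl _ _)); rewrite Hc // eqxx dvd0z.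
  by move/eqP => -[] H0; have := cardG_gt0 H; rewrite H0.
- split; [split|].
  + move=> L sLG c Hc I sIL sIH; move: (Hc I sIL sIH); rewrite dvd0z => /eqP ->.
    exact: dvdz0.
  + move=> Hs; move: (Hs H sHG _ pc H (subxx _) (subconj_refl _ _)).
    by rewrite bmH dvd0z => /eqP -[] p0; rewrite p0 in p_gt0.
  + move=> Hs; have sc1 : subconjG G 1%G K by exists 1; rewrite ?group1 // conjs1g sub1G.
    move: (Hs H sHG _ pc 1%G (sub1G _) sc1).
    by rewrite bm_delta_top ?sub1G // dvd0z => /eqP -[] p0; rewrite p0 in p_gt0.
- split.
  + move=> Hs.
    have epq : p = q.
      apply/eqP; apply: contraT => npq.
      have pc' : in_primeTI G K p H (delta H (Posz p)).
        by move=> I sIH _; rewrite bm_delta_top // dvdzz.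
      move: (Hs H sHG _ pc' H (subxx _) (subconj_refl _ _)).
      rewrite bmH dvdzE /= dvdn_prime2 // => /eqP eqp.
      by rewrite eqp eqxx in npq.
    subst q; split => //.
    apply/subconjP; apply: contraT => /subconjP nOK.
    have : in_primeTI G K p O cO.
      move=> I sIO sIK; rewrite HcO //; case: eqP => [EI|]; last by rewrite dvdz0.
      exfalso; apply: nOK; case: sIK => g Gg; rewrite EI => sOK.
      exists g => //; apply: subset_trans (Oup_conj_sub p sOK).
      by rewrite conjSg.
    move/(Hs O sOG)/(_ O (subxx _) sOHc).
    by rewrite bmOO.
  + move=> [<- [g Gg sOHK]] L sLG c Hc J sJL [h Gh sJH].
    rewrite bm_modp //; apply: Hc; first exact: subset_trans (Oup_sub p J) sJL.
    exists (h * g); first exact: groupM.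
    rewrite conjsgM; apply: subset_trans (Oup_sub p K).
    apply: subset_trans sOHK; rewrite conjSg; exact: Oup_conj_sub.
- split.
  + move=> Hs; apply/subconjP; apply: contraT => /subconjP nOK.
    have : in_primeTI G K 0 O cO.
      move=> I sIO sIK; rewrite HcO //; case: eqP => [EI|]; last by rewrite dvdz0.
      by exfalso; apply: nOK; rewrite -OupGE -EI.
    move/(Hs O sOG)/(_ O (subxx _) sOHc).
    by rewrite bmOO.
  + move=> [g Gg sOK] L sLG c Hc J sJL [h Gh sJH].
    rewrite bm_modp //.
    have := Hc (OupG p J) (subset_trans (Oup_sub p J) sJL).
    rewrite dvd0z => H0; rewrite (eqP (H0 _)) ?dvdz0 //.
    exists (h * g); first exact: groupM.
    rewrite conjsgM; apply: subset_trans sOK; rewrite conjSg; exact: Oup_conj_sub.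
Qed.
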